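(* Let $\Gamma\Rightarrow\Delta$ be a saturated upper sequent of a branch $\mathcal{B}$ of a derivation in $\mathsf{CL}$ (with L$>^\star$ and Mon$\forall$) of a sequent $\Rightarrow x_0:A_0$. Then there exist a finite neighbourhood model $\mathcal{M}$ and a realization $(\rho,\sigma)$ of the labels of the branch such that $\mathcal{M}\vDash_{\rho,\sigma}\mathcal{F}$ for every $\mathcal{F}\in\downarrow\Gamma$ and $\mathcal{M}\nvDash_{\rho,\sigma}\mathcal{F}$ for every $\mathcal{F}\in\downarrow\Delta$.
   Context: Syntax: world labels, neighbourhood labels; relational atoms $a\in N(x)$, $x\in a$, $a\subseteq b$; labelled formulas: these, $x:A$, $a\Vdash^\exists A$, $a\Vdash^\forall A$, $x\Vdash_aA|B$, for $A,B\in\mathcal{L}::=p\mid\bot\mid A\wedge B\mid A\lor B\mid A\to B\mid A>B$. The calculus (premisses / conclusion; ''fresh'': label not in conclusion): initial sequents $x:p,\Gamma\Rightarrow\Delta,x:p$, $x:\bot,\Gamma\Rightarrow\Delta$; G3 rules for $\wedge,\vee,\to$; L$\forall$: $x:A,x\in a,a\Vdash^\forall A,\Gamma\Rightarrow\Delta$ / $x\in a,a\Vdash^\forall A,\Gamma\Rightarrow\Delta$; R$\forall$ (x fresh): $x\in a,\Gamma\Rightarrow\Delta,x:A$ / $\Gamma\Rightarrow\Delta,a\Vdash^\forall A$; L$\exists$ (x fresh): $x\in a,x:A,\Gamma\Rightarrow\Delta$ / $a\Vdash^\exists A,\Gamma\Rightarrow\Delta$; R$\exists$: $x\in a,\Gamma\Rightarrow\Delta,x:A,a\Vdash^\exists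 A$ / $x\in a,\Gamma\Rightarrow\Delta,a\Vdash^\exists A$; R$>$ (a fresh): $a\in N(x),a\Vdash^\exists A,\Gamma\Rightarrow\Delta,x\Vdash_aA|B$ / $\Gamma\Rightarrow\Delta,x:A>B$; L$>^\star$: $a\in N(x),x:A>B,\Gamma\Rightarrow\Delta,a\Vdash^\exists A$ and $a\Vdash^\exists A,x\Vdash_aA|B,a\in N(x),x:A>B,\Gamma\Rightarrow\Delta$ / $a\in N(x),x:A>B,\Gamma\Rightarrow\Delta$; R$|$: $c\in N(x),c\subseteq a,\Gamma\Rightarrow\Delta,x\Vdash_aA|B,c\Vdash^\exists A$ and $c\in N(x),c\subseteq a,\Gamma\Rightarrow\Delta,x\Vdash_aA|B,c\Vdash^\forall A\to B$ / $c\in N(x),c\subseteq a,\Gamma\Rightarrow\Delta,x\Vdash_aA|B$; L$|$ (c fresh): $c\in N(x),c\subseteq a,c\Vdash^\exists A,c\Vdash^\forall A\to B,\Gamma\Rightarrow\Delta$ / $x\Vdash_aA|B,\Gamma\Rightarrow\Delta$; Ref: $a\subseteq a,\Gamma\Rightarrow\Delta$ / $\Gamma\Rightarrow\Delta$; Tr: $c\subseteq a,c\subseteq b,b\subseteq a,\Gamma\Rightarrow\Delta$ / $c\subseteq b,b\subseteq a,\Gamma\Rightarrow\Delta$; L$\subseteq$: $x\in a,a\subseteq b,x\in b,\Gamma\Rightarrow\Delta$ / $x\in a,a\subseteq b,\Gamma\Rightarrow\Delta$; Mon$\forall$: $b\subseteq a,b\Vdash^\forall A,a\Vdash^\forall A,\Gamma\Rightarrow\Delta$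 / $b\subseteq a,a\Vdash^\forall A,\Gamma\Rightarrow\Delta$. For a branch $S_0,\dots,S_k$ with $S_k=\Gamma\Rightarrow\Delta$, $\downarrow\Gamma$ ($\downarrow\Delta$) is the union of the antecedents (succedents) of $S_0,\dots,S_k$. Saturated means: no $x:p$ in $\Gamma\cap\Delta$, no $x:\bot$ in $\Gamma$, and: $x:A\wedge B\in\downarrow\Gamma\Rightarrow x:A,x:B\in\downarrow\Gamma$; $x:A\wedge B\in\downarrow\Delta\Rightarrow x:A$ or $x:B\in\downarrow\Delta$; $x:A\vee B\in\downarrow\Gamma\Rightarrow x:A$ or $x:B\in\downarrow\Gamma$; $x:A\vee B\in\downarrow\Delta\Rightarrow x:A,x:B\in\downarrow\Delta$; $x:A\to B\in\downarrow\Gamma\Rightarrow x:B\in\downarrow\Gamma$ or $x:A\in\downarrow\Delta$; $x:A\to B\in\Delta\Rightarrow x:A\in\downarrow\Gamma$ and $x:B\in\downarrow\Delta$; if $a$ occurs in $\Gamma\cup\Delta$ then $a\subseteq a\in\Gamma$; $a\subseteq b,b\subseteq c\in\Gamma\Rightarrow a\subseteq c\in\Gamma$; $x\in a,a\subseteq b\in\Gamma\Rightarrow x\in b\in\Gamma$; $x\in a,a\Vdash^\forall A\in\Gamma\Rightarrow x:A\in\downarrow\Gamma$; $a\Vdash^\forall A\in\downarrow\Delta\Rightarrow$ some $x$ with $x\in a\in\Gamma$, $x:A\in\downarrow\Delta$; $a\Vdash^\exists A\in\downarrow\Gamma\Rightarrow$ some $x$ with $x\in a\in\Gamma$, $x:A\in\downarrow\Gamma$;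 $x\in a\in\Gamma$, $a\Vdash^\exists A\in\Delta\Rightarrow x:A\in\downarrow\Delta$; $x:A>B\in\downarrow\Delta\Rightarrow$ some $a$ with $a\in N(x)\in\Gamma$, $a\Vdash^\exists A\in\downarrow\Gamma$, $x\Vdash_aA|B\in\Delta$; $a\in N(x),x:A>B\in\Gamma\Rightarrow a\Vdash^\exists A\in\downarrow\Delta$ or ($a\Vdash^\exists A,x\Vdash_aA|B\in\downarrow\Gamma$); $c\in N(x),c\subseteq a\in\Gamma$, $x\Vdash_aA|B\in\Delta\Rightarrow c\Vdash^\exists A\in\Delta$ or $c\Vdash^\forall A\to B\in\downarrow\Delta$; $x\Vdash_aA|B\in\downarrow\Gamma\Rightarrow$ some $c$ with $c\in N(x),c\subseteq a\in\Gamma$, $c\Vdash^\exists A\in\downarrow\Gamma$, $c\Vdash^\forall A\to B\in\Gamma$; $b\subseteq a,a\Vdash^\forall A\in\Gamma\Rightarrow b\Vdash^\forall A\in\Gamma$. Neighbourhood model $\langle W,N,\llbracket\cdot\rrbracket\rangle$: $W\neq\emptyset$, $N:W\to\mathcal{P}(\mathcal{P}(W))$, every $\alpha\in N(x)$ non-empty; $x\Vdash A>B$ iff every $\alpha\in N(x)$ containing an $A$-world has some $\beta\in N(x)$, $\beta\subseteq\alpha$, containing an $A$-world and with all worlds forcing $A\to B$. A realization $(\rho,\sigma)$ maps world labels to worlds and neighbourhood labels to sets of worlds; $\mathcal{M}\vDash_{\rho,\sigma}a\in N(x)$ iff $\sigma(a)\in N(\rho(x))$; $a\subseteq b$ iff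 $\sigma(a)\subseteq\sigma(b)$; $y\in a$ iff $\rho(y)\in\sigma(a)$; $x:A$ iff $\rho(x)\Vdash A$; $a\Vdash^\forall A$ iff all worlds of $\sigma(a)$ force $A$; $a\Vdash^\exists A$ iff some world of $\sigma(a)$ forces $A$; $x\Vdash_aA|B$ iff $\sigma(a)\in N(\rho(x))$ and some $\beta\subseteq\sigma(a)$ contains an $A$-world and all its worlds force $A\to B$. *)

(* Defs.v *)
From mathcomp Require Import all_boot.
From Stdlib Require Import Permutation.
Set Implicit Arguments. Unset Strict Implicit. Unset Printing Implicit Defensive.

(* Propositional atoms, world labels and neighbourhood labels are all nat;
   the two label sorts are kept apart by the constructors of [lform]. *)
Definition atom := nat.
Definition wlab := nat.
Definition nlab := nat.

Inductive form : Type :=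
| Atom of atom
| Bot
| And of form & form
| Or  of form & form
| Imp of form & form
| Cnd of form & form.

Inductive lform : Type :=
| InN   of nlab & wlab                 (* a ∈ N(x)        *)
| Mem   of wlab & nlab
| Sub   of nlab & nlab
| WF    of wlab & form                 (* x : A           *)
| AllF  of nlab & form                 (* a ⊩∀ A          *)
| ExF   of nlab & form                 (* a ⊩∃ A          *)
| CondF of wlab & nlab & form & form.  (* x ⊩_a A | B     *)

(* Sequents: pairs of multisets (lists up to permutation). *)
Definition sequent := (list lform * list lform)%type.

Definition wlab_occ (x : wlab) (F : lform) : Prop :=
  match F with
  | InN _ y | Mem y _ | WF y _ | CondF y _ _ _ => y = x
  | _ => False
  end.

Definition nlab_occ (a : nlab) (F : lform) : Prop :=
  match F with
  | InN b _ | Mem _ b | AllF b _ | ExF b _ | CondF _ b _ _ => b = a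
  | Sub b c => b = a \/ c = a
  | WF _ _ => False
  end.

Definition wfresh (x : wlab) (S : sequent) : Prop :=
  forall F, List.In F (S.1 ++ S.2) -> ~ wlab_occ x F.
Definition nfresh (a : nlab) (S : sequent) : Prop :=
  forall F, List.In F (S.1 ++ S.2) -> ~ nlab_occ a F.

Inductive rule_inst : sequent -> list sequent -> Prop :=
| r_init (x : wlab) (p : atom) G D :
    rule_inst (WF x (Atom p) :: G, WF x (Atom p) :: D) [::]
| r_bot (x : wlab) G D :
    rule_inst (WF x Bot :: G, D) [::]
| r_Land x A B G D :
    rule_inst (WF x (And A B) :: G, D) [:: (WF x A :: WF x B :: G, D)]
| r_Rand x A B G D :
    rule_inst (G, WF x (And A B) :: D) [:: (G, WF x A :: D); (G, WF x B :: D)]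
| r_Lor x A B G D :
    rule_inst (WF x (Or A B) :: G, D) [:: (WF x A :: G, D); (WF x B :: G, D)]
| r_Ror x A B G D :
    rule_inst (G, WF x (Or A B) :: D) [:: (G, WF x A :: WF x B :: D)]
| r_Limp x A B G D :
    rule_inst (WF x (Imp A B) :: G, D) [:: (G, WF x A :: D); (WF x B :: G, D)]
| r_Rimp x A B G D :
    rule_inst (G, WF x (Imp A B) :: D) [:: (WF x A :: G, WF x B :: D)]
| r_Lall x a A G D :
    rule_inst (Mem x a :: AllF a A :: G, D)
              [:: (WF x A :: Mem x a :: AllF a A :: G, D)]
| r_Rall x a A G D :
    wfresh x (G, AllF a A :: D) ->
    rule_inst (G, AllF a A :: D) [:: (Mem x a :: G, WF x A :: D)]
| r_Lex x a A G D :
    wfresh x (ExF a A :: G, D) ->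
    rule_inst (ExF a A :: G, D) [:: (Mem x a :: WF x A :: G, D)]
| r_Rex x a A G D :
    rule_inst (Mem x a :: G, ExF a A :: D)
              [:: (Mem x a :: G, WF x A :: ExF a A :: D)]
| r_Rcnd x a A B G D :
    nfresh a (G, WF x (Cnd A B) :: D) ->
    rule_inst (G, WF x (Cnd A B) :: D)
              [:: (InN a x :: ExF a A :: G, CondF x a A B :: D)]
| r_Lcnd_star x a A B G D :
    rule_inst (InN a x :: WF x (Cnd A B) :: G, D)
      [:: (InN a x :: WF x (Cnd A B) :: G, ExF a A :: D);
          (ExF a A :: CondF x a A B :: InN a x :: WF x (Cnd A B) :: G, D)]
| r_Rbar x a c A B G D :
    rule_inst (InN c x :: Sub c a :: G, CondF x a A B :: D)
      [:: (InN c x :: Sub c a :: G, CondF x a A B :: ExF c A :: D);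
          (InN c x :: Sub c a :: G, CondF x a A B :: AllF c (Imp A B) :: D)]
| r_Lbar x a c A B G D :
    nfresh c (CondF x a A B :: G, D) ->
    rule_inst (CondF x a A B :: G, D)
      [:: (InN c x :: Sub c a :: ExF c A :: AllF c (Imp A B) :: G, D)]
| r_Ref a G D :
    rule_inst (G, D) [:: (Sub a a :: G, D)]
| r_Tr a b c G D :
    rule_inst (Sub c b :: Sub b a :: G, D)
              [:: (Sub c a :: Sub c b :: Sub b a :: G, D)]
| r_Lsub x a b G D :
    rule_inst (Mem x a :: Sub a b :: G, D)
              [:: (Mem x a :: Sub a b :: Mem x b :: G, D)]
| r_Mon a b A G D :
    rule_inst (Sub b a :: AllF a A :: G, D)
              [:: (Sub b a :: AllF b A :: AllF a A :: G, D)].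

Definition seq_equiv (S T : sequent) : Prop :=
  Permutation S.1 T.1 /\ Permutation S.2 T.2.

Definition step (S S' : sequent) : Prop :=
  exists C Ps P, rule_inst C Ps /\ seq_equiv S C /\ List.In P Ps /\ seq_equiv S' P.

Definition root_seq (x0 : wlab) (A0 : form) : sequent := ([::], [:: WF x0 A0]).

Definition is_branch (x0 : wlab) (A0 : form) (B : seq sequent) : Prop :=
  [/\ 0 < size B,
      nth (root_seq x0 A0) B 0 = root_seq x0 A0 &
      forall i, i.+1 < size B ->
        step (nth (root_seq x0 A0) B i) (nth (root_seq x0 A0) B i.+1)].

Definition upper (x0 : wlab) (A0 : form) (B : seq sequent) : sequent :=
  last (root_seq x0 A0) B.

Definition downG (B : seq sequent) (F : lform) : Prop :=
  exists S, List.In S B /\ List.In F S.1.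
Definition downD (B : seq sequent) (F : lform) : Prop :=
  exists S, List.In S B /\ List.In F S.2.

Definition saturated (B : seq sequent) (G D : list lform) : Prop :=
  let dG := downG B in let dD := downD B in
  (forall x p, ~ (List.In (WF x (Atom p)) G /\ List.In (WF x (Atom p)) D)) /\
      (forall x, ~ List.In (WF x Bot) G) /\
      (forall x A B', dG (WF x (And A B')) -> dG (WF x A) /\ dG (WF x B')) /\
      (forall x A B', dD (WF x (And A B')) -> dD (WF x A) \/ dD (WF x B')) /\
      (forall x A B', dG (WF x (Or A B')) -> dG (WF x A) \/ dG (WF x B')) /\
      (forall x A B', dD (WF x (Or A B')) -> dD (WF x A) /\ dD (WF x B')) /\
      (forall x A B', dG (WF x (Imp A B')) -> dG (WF x B') \/ dD (WF x A)) /\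
      (forall x A B', List.In (WF x (Imp A B')) D -> dG (WF x A) /\ dD (WF x B')) /\
      (forall a, (exists F, List.In F (G ++ D) /\ nlab_occ a F) ->
                 List.In (Sub a a) G) /\
      (forall a b c, List.In (Sub a b) G -> List.In (Sub b c) G ->
                          List.In (Sub a c) G) /\
          (forall x a b, List.In (Mem x a) G -> List.In (Sub a b) G ->
                          List.In (Mem x b) G) /\
          (forall x a A, List.In (Mem x a) G -> List.In (AllF a A) G ->
                          dG (WF x A)) /\
          (forall a A, dD (AllF a A) ->
                          exists x, List.In (Mem x a) G /\ dD (WF x A)) /\
          (forall a A, dG (ExF a A) ->
                          exists x, List.In (Mem x a) G /\ dG (WF x A)) /\
          (forall x a A, List.In (Mem x a) G -> List.In (ExF a A) D ->
                          dD (WF x A)) /\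
          (forall x A B', dD (WF x (Cnd A B')) ->
                          exists a, [/\ List.In (InN a x) G, dG (ExF a A) &
                                        List.In (CondF x a A B') D]) /\
          (forall x a A B', List.In (InN a x) G -> List.In (WF x (Cnd A B')) G ->
                          dD (ExF a A) \/ (dG (ExF a A) /\ dG (CondF x a A B'))) /\
          (forall x a c A B', List.In (InN c x) G -> List.In (Sub c a) G ->
                          List.In (CondF x a A B') D ->
                          List.In (ExF c A) D \/ dD (AllF c (Imp A B'))) /\
           (forall x a A B', dG (CondF x a A B') ->
                 exists c, [/\ List.In (InN c x) G, List.In (Sub c a) G,
                               dG (ExF c A) & List.In (AllF c (Imp A B')) G]) /\
              (forall a b A, List.In (Sub b a) G -> List.In (AllF a A) G ->
                          List.In (AllF b A) G).

Record nmodel := NModel {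
  W : finType;
  N : W -> {set {set W}};
  V : atom -> {set W};
  W_nonempty : 0 < #|W|;
  N_nonempty : forall (x : W) (alpha : {set W}), alpha \in N x -> alpha != set0
}.

Fixpoint forces (M : nmodel) (w : W M) (A : form) {struct A} : Prop :=
  match A with
  | Atom p => w \in V M p
  | Bot => False
  | And A1 A2 => forces w A1 /\ forces w A2
  | Or A1 A2 => forces w A1 \/ forces w A2
  | Imp A1 A2 => forces w A1 -> forces w A2
  | Cnd A1 A2 =>
      forall alpha, alpha \in N w -> (exists y, y \in alpha /\ forces y A1) ->
        exists beta, [/\ beta \in N w, beta \subset alpha,
                         (exists y, y \in beta /\ forces y A1) &
                         (forall y, y \in beta -> forces y A1 -> forces y A2)]
  end.

Definition lsat (M : nmodel) (rho : wlab -> W M) (sigma : nlab -> {set W M})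
    (F : lform) : Prop :=
  match F with
  | InN a x => sigma a \in N (rho x)
  | Mem y a => rho y \in sigma a
  | Sub a b => sigma a \subset sigma b
  | WF x A => forces (rho x) A
  | AllF a A => forall y, y \in sigma a -> forces y A
  | ExF a A => exists y, y \in sigma a /\ forces y A
  | CondF x a A B =>
      sigma a \in N (rho x) /\
      exists beta, [/\ beta \in N (rho x), beta \subset sigma a,
                       (exists y, y \in beta /\ forces y A) &
                       (forall y, y \in beta -> forces y A -> forces y B)]
  end.

(* Main.v *)
Require Import Defs.
From mathcomp Require Import all_boot.
From Stdlib Require Import Permutation.
Import Defs.
Set Implicit Arguments. Unset Strict Implicit.

Definition keepL (F : lform) : bool :=
  match F with
  | InN _ _ | Mem _ _ | Sub _ _ | AllF _ _ => true
  | WF _ (Atom _) | WF _ Bot | WF _ (Cnd _ _) => true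
  | _ => false end.
Definition keepR (F : lform) : bool :=
  match F with
  | WF _ (Atom _) | ExF _ _ | CondF _ _ _ _ => true | _ => false end.
Definition relational (F : lform) : bool :=
  match F with InN _ _ | Mem _ _ | Sub _ _ => true | _ => false end.

Ltac inv_in := repeat match goal with
  | H : List.In _ nil |- _ => destruct H
  | H : List.In _ (_ :: _) |- _ => destruct H as [H|H]
  end.
Ltac inj_eqs := repeat match goal with
  | H : ?X = ?X |- _ => clear H
  | H : ?v = _ |- _ => is_var v; subst v
  | H : _ = ?v |- _ => is_var v; subst v
  | H : _ = _ |- _ => first [ discriminate H | injection H; clear H; intros ]
  end.
Ltac rsolve := cbn [fst snd] in *; inv_in; inj_eqs; cbn [fst snd] in *; inv_in; inj_eqs; simpl in *; try discriminate;
   first [ tauto | left; tauto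
     | solve [right; eexists; repeat (first [left; reflexivity | right]); assumption]
     | solve [right; eexists; repeat (first [left; reflexivity | right])]
     | idtac ].

Lemma ra C Ps P F : rule_inst C Ps -> List.In P Ps -> keepL F -> List.In F C.1 -> List.In F P.1.
Proof. intros Hr HP HK HF; destruct Hr; rsolve. Qed.
Lemma rb C Ps P F : rule_inst C Ps -> List.In P Ps -> keepR F -> List.In F C.2 -> List.In F P.2.
Proof. intros Hr HP HK HF; destruct Hr; rsolve. Qed.
Lemma rc C Ps P x A B : rule_inst C Ps -> List.In P Ps -> List.In (WF x (Imp A B)) C.2 ->
  List.In (WF x (Imp A B)) P.2 \/ (List.In (WF x A) P.1 /\ List.In (WF x B) P.2).
Proof. intros Hr HP HF; destruct Hr; rsolve. Qed.
Lemma rd C Ps P a x : rule_inst C Ps -> List.In P Ps -> List.In (InN a x) P.1 ->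
  List.In (InN a x) C.1 \/ exists A, List.In (ExF a A) P.1.
Proof. intros Hr HP HF; destruct Hr; rsolve. Qed.
Lemma re C Ps P x a A B : rule_inst C Ps -> List.In P Ps -> List.In (CondF x a A B) P.1 ->
  List.In (CondF x a A B) C.1 \/ List.In (InN a x) P.1.
Proof. intros Hr HP HF; destruct Hr; rsolve. Qed.
Lemma rf C Ps P F : rule_inst C Ps -> List.In P Ps -> List.In F P.2 ->
  List.In F C.2 \/ relational F = false.
Proof. intros Hr HP HF; destruct Hr; rsolve. Qed.
From mathcomp Require Import zify.

Lemma pin T (l l' : list T) x : Permutation l l' -> List.In x l -> List.In x l'.
Proof. exact: Permutation_in. Qed.
Lemma pin' T (l l' : list T) x : Permutation l' l -> List.In x l -> List.In x l'.
Proof. move=> H; apply: pin; exact: Permutation_sym. Qed.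

Lemma step_inv S S' : step S S' ->
  [/\ (forall F, keepL F -> List.In F S.1 -> List.In F S'.1),
      (forall F, keepR F -> List.In F S.2 -> List.In F S'.2),
      (forall x A B, List.In (WF x (Imp A B)) S.2 -> List.In (WF x (Imp A B)) S'.2 \/
            (List.In (WF x A) S'.1 /\ List.In (WF x B) S'.2)) &
      ((forall a x, List.In (InN a x) S'.1 -> List.In (InN a x) S.1 \/ exists A, List.In (ExF a A) S'.1) /\
      (forall x a A B, List.In (CondF x a A B) S'.1 -> List.In (CondF x a A B) S.1 \/ List.In (InN a x) S'.1) /\
      (forall F, List.In F S'.2 -> List.In F S.2 \/ relational F = false))].
Proof.
case=> [C [Ps [P [Hr [[E1 E2] [HP [E1' E2']]]]]]]; split; [| | |split; [|split]].
- move=> F HK HF; apply: (pin' E1'); apply: (ra Hr HP HK); exact: pin E1 HF.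
- move=> F HK HF; apply: (pin' E2'); apply: (rb Hr HP HK); exact: pin E2 HF.
- move=> x A B HF; case: (rc Hr HP (pin E2 HF)) => [h|[h1 h2]].
  + by left; apply: (pin' E2').
  + by right; split; [apply: (pin' E1') | apply: (pin' E2')].
- move=> a x HF; case: (rd Hr HP (pin E1' HF)) => [h|[A h]].
  + by left; apply: (pin' E1).
  + by right; exists A; apply: (pin' E1').
- move=> x a A B HF; case: (re Hr HP (pin E1' HF)) => [h|h].
  + by left; apply: (pin' E1).
  + by right; apply: (pin' E1').
- move=> F HF; case: (rf Hr HP (pin E2' HF)) => [h|h]; last by right.
  by left; apply: (pin' E2).
Qed.

Lemma nth_In' T (d : T) (s : seq T) i : i < size s -> List.In (nth d s i) s.
Proof. elim: s i => [|x s IH] [|i] //= H; [by left | right; exact: IH]. Qed.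
Lemma In_nth' T (d : T) (s : seq T) x : List.In x s -> exists2 i, i < size s & nth d s i = x.
Proof.
elim: s => [|y s IH] //= [<-|/IH [i Hi E]]; first by exists 0.
by exists i.+1.
Qed.

Section Branch.
Variables (x0 : wlab) (A0 : form) (B : seq sequent).
Hypothesis hB : is_branch x0 A0 B.
Hypothesis hs8 : forall x A B', List.In (WF x (Imp A B')) (upper x0 A0 B).2 ->
   downG B (WF x A) /\ downD B (WF x B').
Local Notation d := (root_seq x0 A0).

Lemma fwd i : i < size B ->
  (forall a x, List.In (InN a x) (nth d B i).1 -> exists A, downG B (ExF a A)) /\
  (forall x a A B', List.In (CondF x a A B') (nth d B i).1 -> List.In (InN a x) (nth d B i).1) /\
  (forall F, List.In F (nth d B i).2 -> relational F = false).
Proof.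
case: hB => Hs H0 Hst.
elim: i => [|i IH] Hi.
- rewrite H0 /=; split; first by [].
  split; first by [].
  by move=> F [<-|[]].
- have [ha _ _ [hd [he hf]]] := step_inv (Hst i Hi).
  have [I1 [I2 I3]] := IH (ltnW Hi).
  split.
  + move=> a x /hd [/I1 //|[A HA]]; exists A; exists (nth d B i.+1); split => //.
    exact: nth_In'.
  split.
  + move=> x a A B' /he [/I2 H|//]. exact: (ha (InN a x) erefl H).
  + by move=> F /hf [/I3|].
Qed.

Lemma bwd k i : i + k = (size B).-1 ->
  (forall F, keepL F -> List.In F (nth d B i).1 -> List.In F (upper x0 A0 B).1) /\
  (forall F, keepR F -> List.In F (nth d B i).2 -> List.In F (upper x0 A0 B).2) /\
  (forall x A B', List.In (WF x (Imp A B')) (nth d B i).2 -> downG B (WF x A) /\ downD B (WF x B')).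
Proof.
case: hB => Hs H0 Hst.
elim: k i => [|k IH] i Hik.
- rewrite addn0 in Hik; subst i; rewrite nth_last /upper.
  split; first by []. split; first by []. exact: hs8.
- have Hi : i.+1 < size B by lia.
  have [J1 [J2 J3]] := IH i.+1 ltac:(by rewrite addSnnS).
  have [ha hb hc _] := step_inv (Hst i Hi).
  split; first by move=> F HK HF; apply: J1 HK (ha F HK HF).
  split; first by move=> F HK HF; apply: J2 HK (hb F HK HF).
  move=> x A B' /hc [/J3 //|[H1 H2]]; split.
  + exists (nth d B i.+1); split => //; exact: nth_In'.
  + exists (nth d B i.+1); split => //; exact: nth_In'.
Qed.

Lemma upper_In : List.In (upper x0 A0 B) B.
Proof. case: hB => Hs _ _; rewrite /upper -nth_last; apply: nth_In'; lia. Qed.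

Lemma allJ S : List.In S B ->
  (forall F, keepL F -> List.In F S.1 -> List.In F (upper x0 A0 B).1) /\
  (forall F, keepR F -> List.In F S.2 -> List.In F (upper x0 A0 B).2) /\
  (forall x A B', List.In (WF x (Imp A B')) S.2 -> downG B (WF x A) /\ downD B (WF x B')).
Proof.
move=> /(In_nth' d) [i Hi <-]. apply: (bwd (k := (size B).-1 - i)). lia.
Qed.

Lemma allI S : List.In S B ->
  (forall a x, List.In (InN a x) S.1 -> exists A, downG B (ExF a A)) /\
  (forall x a A B', List.In (CondF x a A B') S.1 -> List.In (InN a x) S.1) /\
  (forall F, List.In F S.2 -> relational F = false).
Proof. move=> /(In_nth' d) [i Hi <-]. exact: fwd. Qed.

End Branch.

Definition form_eq_dec : forall A B : form, {A = B} + {A <> B}.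
Proof. decide equality; apply: PeanoNat.Nat.eq_dec. Defined.
Definition lform_eq_dec : forall A B : lform, {A = B} + {A <> B}.
Proof. decide equality; first [apply: form_eq_dec | apply: PeanoNat.Nat.eq_dec]. Defined.
Definition inb (F : lform) (L : list lform) : bool :=
  if List.In_dec lform_eq_dec F L then true else false.
Lemma inbP F L : reflect (List.In F L) (inb F L).
Proof. rewrite /inb; case: List.In_dec => h; by constructor. Qed.

Definition maxlab (F : lform) : nat :=
  match F with
  | InN a x => maxn a x | Mem y a => maxn y a | Sub a b => maxn a b
  | WF x _ => x | AllF a _ => a | ExF a _ => a | CondF x a _ _ => maxn x a end.

Lemma lbl2 a b n : maxn a b <= n -> a <= n /\ b <= n.
Proof. by rewrite geq_max => /andP. Qed.

Section Model.
Variables (B : seq sequent) (G D : list lform) (n : nat).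
Hypotheses
(hGsub : forall F, List.In F G -> downG B F)
(hbG : forall F, downG B F -> maxlab F <= n)
(hbD : forall F, downD B F -> maxlab F <= n)
(hkL : forall F, downG B F -> keepL F -> List.In F G)
(hkR : forall F, downD B F -> keepR F -> List.In F D)
(himp : forall x A B', downD B (WF x (Imp A B')) -> downG B (WF x A) /\ downD B (WF x B'))
(hinN : forall a x, List.In (InN a x) G -> exists A, downG B (ExF a A))
(hcnd : forall x a A B', downG B (CondF x a A B') -> List.In (InN a x) G)
(hrel : forall F, downD B F -> relational F = false)
(s1 : forall x p, ~ (List.In (WF x (Atom p)) G /\ List.In (WF x (Atom p)) D))
(s2 : forall x, ~ List.In (WF x Bot) G)
(s3 : forall x A B', downG B (WF x (And A B')) -> downG B (WF x A) /\ downG B (WF x B'))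
(s4 : forall x A B', downD B (WF x (And A B')) -> downD B (WF x A) \/ downD B (WF x B'))
(s5 : forall x A B', downG B (WF x (Or A B')) -> downG B (WF x A) \/ downG B (WF x B'))
(s6 : forall x A B', downD B (WF x (Or A B')) -> downD B (WF x A) /\ downD B (WF x B'))
(s7 : forall x A B', downG B (WF x (Imp A B')) -> downG B (WF x B') \/ downD B (WF x A))
(s9 : forall a, (exists F, List.In F (G ++ D) /\ nlab_occ a F) -> List.In (Sub a a) G)
(s10 : forall a b c, List.In (Sub a b) G -> List.In (Sub b c) G -> List.In (Sub a c) G)
(s11 : forall x a b, List.In (Mem x a) G -> List.In (Sub a b) G -> List.In (Mem x b) G)
(s12 : forall x a A, List.In (Mem x a) G -> List.In (AllF a A) G -> downG B (WF x A))
(s13 : forall a A, downD B (AllF a A) -> exists x, List.In (Mem x a) G /\ downD B (WF x A))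
(s14 : forall a A, downG B (ExF a A) -> exists x, List.In (Mem x a) G /\ downG B (WF x A))
(s15 : forall x a A, List.In (Mem x a) G -> List.In (ExF a A) D -> downD B (WF x A))
(s16 : forall x A B', downD B (WF x (Cnd A B')) -> exists a,
   [/\ List.In (InN a x) G, downG B (ExF a A) & List.In (CondF x a A B') D])
(s17 : forall x a A B', List.In (InN a x) G -> List.In (WF x (Cnd A B')) G ->
   downD B (ExF a A) \/ (downG B (ExF a A) /\ downG B (CondF x a A B')))
(s18 : forall x a c A B', List.In (InN c x) G -> List.In (Sub c a) G ->
   List.In (CondF x a A B') D -> List.In (ExF c A) D \/ downD B (AllF c (Imp A B')))
(s19 : forall x a A B', downG B (CondF x a A B') -> exists c,
   [/\ List.In (InN c x) G, List.In (Sub c a) G, downG B (ExF c A) &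
       List.In (AllF c (Imp A B')) G]).

Local Notation W0 := ('I_n.+1 * option 'I_n.+1)%type.
Definition sigP (a : nlab) (w : W0) : bool :=
  inb (Mem (val w.1) a) G && (if w.2 is Some b then inb (Sub (val b) a) G else true).
Definition sig (a : nlab) : {set W0} := [set w | sigP a w].
Definition Nf (w : W0) : {set {set W0}} :=
  [set sig (val a) | a : 'I_n.+1 & inb (InN (val a) (val w.1)) G].
Definition VfP (p : atom) (w : W0) : bool := inb (WF (val w.1) (Atom p)) G.
Definition Vf (p : atom) : {set W0} := [set w | VfP p w].

Lemma Wne : 0 < #|{: W0}|.
Proof. apply/card_gt0P; by exists (ord0, None). Qed.

Lemma memG_bound y a : List.In (Mem y a) G -> y <= n /\ a <= n.
Proof. move=> H; apply: lbl2; exact: (hbG (hGsub H)). Qed.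

Lemma rho_sig0 y a : y <= n -> List.In (Mem y a) G -> ((inord y, None) : W0) \in sig a.
Proof. move=> Hy H; rewrite inE /sigP /= inordK // andbT; exact/inbP. Qed.

Lemma Nne : forall (x : W0) (alpha : {set W0}), alpha \in Nf x -> alpha != set0.
Proof.
move=> w al /imsetP [a]; rewrite inE => /inbP Ha ->.
have [A HA] := hinN Ha. have [z [Hz _]] := s14 HA.
apply/set0Pn; exists (inord z, None); apply: rho_sig0 => //.
exact: (memG_bound Hz).1.
Qed.

Definition Mod := @NModel W0 Nf Vf Wne Nne.
Definition rho (y : wlab) : W Mod := (inord y, None).

Lemma L_sig_mem (w : W0) a : w \in sig a -> List.In (Mem (val w.1) a) G.
Proof. by rewrite inE => /andP [/inbP]. Qed.

Lemma L_rho_sig y a : y <= n -> List.In (Mem y a) G -> rho y \in sig a.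
Proof. exact: rho_sig0. Qed.

Lemma L_sub a b : List.In (Sub a b) G -> sig a \subset sig b.
Proof.
move=> H; apply/subsetP => -[i [c|]]; rewrite !inE /sigP /=.
- move=> /andP [/inbP Hm /inbP Hs]; apply/andP; split; apply/inbP.
  + exact: s11 Hm H.
  + exact: s10 Hs H.
- rewrite !andbT => /inbP Hm; apply/inbP; exact: s11 Hm H.
Qed.

Lemma L_copy (i : 'I_n.+1) c a : c <= n -> List.In (Mem (val i) c) G ->
  List.In (Sub c c) G -> sig c \subset sig a -> List.In (Sub c a) G.
Proof.
move=> Hc Hm Hcc /subsetP Hs.
have : ((i, Some (inord c)) : W0) \in sig c.
  by rewrite inE /sigP /= inordK //; apply/andP; split; apply/inbP.
move/Hs; rewrite inE /sigP /= inordK // => /andP [_ /inbP] //.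
Qed.

Lemma L_N x al : x <= n -> al \in Nf (rho x) ->
  exists a, [/\ a <= n, List.In (InN a x) G & al = sig a].
Proof.
move=> Hx /imsetP [a]; rewrite inE /= inordK // => /inbP Ha ->.
exists (val a); split => //; rewrite -ltnS; exact: ltn_ord.
Qed.

Lemma L_N' a x : a <= n -> x <= n -> List.In (InN a x) G -> sig a \in Nf (rho x).
Proof.
move=> Ha Hx H; apply/imsetP; exists (inord a); last by rewrite /= inordK.
by rewrite inE /rho /= !inordK //; apply/inbP.
Qed.

Lemma forces_fst A (w w' : W0) : w.1 = w'.1 ->
  (forces (M:=Mod) w A <-> forces (M:=Mod) w' A).
Proof.
move=> E; elim: A w w' E => [p||A1 IH1 A2 IH2|A1 IH1 A2 IH2|A1 IH1 A2 IH2|A1 IH1 A2 IH2] w w' E /=.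
- by rewrite /Vf !inE /VfP E.
- by [].
- by rewrite (IH1 w w' E) (IH2 w w' E).
- by rewrite (IH1 w w' E) (IH2 w w' E).
- by rewrite (IH1 w w' E) (IH2 w w' E).
- have -> : Nf w = Nf w' by rewrite /Nf E.
  by [].
Qed.

Lemma forces_rho (w : W0) A : forces (M:=Mod) w A <-> forces (M:=Mod) (rho (val w.1)) A.
Proof. apply: forces_fst; by rewrite /= inord_val. Qed.

Definition T A := forall y, (downG B (WF y A) -> forces (rho y) A) /\
                            (downD B (WF y A) -> ~ forces (rho y) A).

Lemma cond_neg x a A B' : T A -> T B' -> x <= n -> List.In (CondF x a A B') D ->
  ~ (exists beta, [/\ beta \in Nf (rho x), beta \subset sig a,
       (exists y, y \in beta /\ forces (M:=Mod) y A) &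
       (forall y, y \in beta -> forces (M:=Mod) y A -> forces (M:=Mod) y B')]).
Proof.
move=> TA TB Hx HD [be [Hbe Hsub [w [Hw HwA]] Hall]].
have [c [Hc Hin E]] := L_N Hx Hbe. subst be.
have Hm := L_sig_mem Hw.
have Hcc : List.In (Sub c c) G.
  apply: s9; exists (InN c x); split => //; apply/List.in_or_app; by left.
have Hca := L_copy Hc Hm Hcc Hsub.
case: (s18 Hin Hca HD) => [HE | HA].
- apply: (TA _).2 (s15 Hm HE) _; exact: (forces_rho w A).1 HwA.
- have [z [Hz HzI]] := s13 HA. have [HzA HzB] := himp HzI.
  have zn := (memG_bound Hz).1.
  apply: (TB z).2 HzB _; apply: Hall; first exact: L_rho_sig.
  exact: (TA z).1.
Qed.

Lemma cond_pos x a A B' : T A -> T B' -> x <= n -> downG B (CondF x a A B') ->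
  exists beta, [/\ beta \in Nf (rho x), beta \subset sig a,
       (exists y, y \in beta /\ forces (M:=Mod) y A) &
       (forall y, y \in beta -> forces (M:=Mod) y A -> forces (M:=Mod) y B')].
Proof.
move=> TA TB Hx HG. have [c [Hin Hca HE HAll]] := s19 HG.
have cn := (lbl2 (hbG (hGsub Hin))).1.
exists (sig c); split.
- exact: L_N' cn Hx Hin.
- exact: L_sub Hca.
- have [z [Hz HzA]] := s14 HE. have zn := (memG_bound Hz).1.
  exists (rho z); split; [exact: L_rho_sig | exact: (TA z).1].
- move=> w Hw HwA. have Hm := L_sig_mem Hw.
  case: (s7 (s12 Hm HAll)) => [HB|HA].
  + apply/forces_rho; exact: (TB _).1 HB.
  + exfalso; apply: (TA _).2 HA _; exact: (forces_rho w A).1 HwA.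
Qed.

Lemma truth A : T A.
Proof.
elim: A => [p||A1 IH1 A2 IH2|A1 IH1 A2 IH2|A1 IH1 A2 IH2|A1 IH1 A2 IH2] y; split => H /=.
- have yn : y <= n := hbG H.
  rewrite /Vf inE /VfP /= inordK //; apply/inbP; exact: hkL H erefl.
- have yn : y <= n := hbD H.
  rewrite /Vf inE /VfP /= inordK // => /inbP Hf; apply: (s1 (x:=y) (p:=p)); split => //.
  exact: hkR H erefl.
- exact: s2 (hkL H erefl).
- by [].
- have [h1 h2] := s3 H; split; [exact: (IH1 y).1 | exact: (IH2 y).1].
- by case: (s4 H) => h [f1 f2]; [exact: (IH1 y).2 h f1 | exact: (IH2 y).2 h f2].
- by case: (s5 H) => h; [left; exact: (IH1 y).1 | right; exact: (IH2 y).1].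
- have [h1 h2] := s6 H; case => f; [exact: (IH1 y).2 h1 f | exact: (IH2 y).2 h2 f].
- move=> f1; case: (s7 H) => h; [exact: (IH2 y).1 h | exfalso; exact: (IH1 y).2 h f1].
- have [h1 h2] := himp H; move=> f; apply: (IH2 y).2 h2 _; apply: f; exact: (IH1 y).1 h1.
- have yn : y <= n := hbG H.
  have HG := hkL H erefl. move=> al Hal [w [Hw HwA]].
  have [a [an Hin E]] := L_N yn Hal. subst al.
  case: (s17 Hin HG) => [HE | [_ HC]].
  + exfalso. have HE' := hkR HE erefl. have Hm := L_sig_mem Hw.
    apply: (IH1 _).2 (s15 Hm HE') _; exact: (forces_rho w A1).1 HwA.
  + exact: cond_pos IH1 IH2 yn HC.
- have yn : y <= n := hbD H.
  move=> Hf. have [a [Hin HE HC]] := s16 H.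
  have an := (lbl2 (hbG (hGsub Hin))).1.
  apply: (cond_neg IH1 IH2 yn HC). apply: Hf; first exact: L_N' an yn Hin.
  have [z [Hz HzA]] := s14 HE. have zn := (memG_bound Hz).1.
  exists (rho z); split; [exact: L_rho_sig | exact: (IH1 z).1].
Qed.

Lemma satG F : downG B F -> lsat (M:=Mod) rho sig F.
Proof.
case: F => [a x|y a|a b|x A|a A|a A|x a A B'] H /=.
- have HG := hkL H erefl. have [an xn] := lbl2 (hbG H). exact: L_N'.
- have [yn an] := lbl2 (hbG H). exact: L_rho_sig (hkL H erefl).
- exact: L_sub (hkL H erefl).
- exact: (truth A x).1.
- move=> w Hw. have HG := hkL H erefl.
  apply/forces_rho; exact: (truth A _).1 (s12 (L_sig_mem Hw) HG).
- have [z [Hz HzA]] := s14 H. have zn := (memG_bound Hz).1.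
  exists (rho z); split; [exact: L_rho_sig | exact: (truth A z).1].
- have [xn an] := lbl2 (hbG H). split.
  + exact: L_N' an xn (hcnd H).
  + exact: cond_pos (truth A) (truth B') xn H.
Qed.

Lemma satD F : downD B F -> ~ lsat (M:=Mod) rho sig F.
Proof.
case: F => [a x|y a|a b|x A|a A|a A|x a A B'] H /=; try by have := hrel H.
- exact: (truth A x).2.
- move=> Hall; have [z [Hz HzA]] := s13 H. have zn := (memG_bound Hz).1.
  apply: (truth A z).2 HzA _; apply: Hall; exact: L_rho_sig.
- case=> w [Hw HwA]. have HD := hkR H erefl.
  apply: (truth A _).2 (s15 (L_sig_mem Hw) HD) _; exact: (forces_rho w A).1 HwA.
- have [xn an] := lbl2 (hbD H).
  case=> _ Hex; exact: cond_neg (truth A) (truth B') xn (hkR H erefl) Hex.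
Qed.

End Model.

Fixpoint bnd (Bs : seq sequent) : nat :=
  if Bs is Sq :: Bs' then maxn (foldr maxn 0 (map maxlab (Sq.1 ++ Sq.2))) (bnd Bs') else 0.
Lemma fold_ok l F : List.In F l -> maxlab F <= foldr maxn 0 (map maxlab l).
Proof. elim: l => //= F' l IH [<-|/IH h]; by rewrite leq_max ?leqnn // h orbT. Qed.
Lemma bnd_ok Bs Sq F : List.In Sq Bs -> List.In F (Sq.1 ++ Sq.2) -> maxlab F <= bnd Bs.
Proof.
elim: Bs => //= S' Bs IH [<- H|H H']; rewrite leq_max.
- by rewrite (fold_ok H).
- by rewrite (IH H H') orbT.
Qed.

Theorem mainTheorem17 (x0 : wlab) (A0 : form) (B : seq sequent) :
  is_branch x0 A0 B ->
  saturated B (upper x0 A0 B).1 (upper x0 A0 B).2 ->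
  exists (M : nmodel) (rho : wlab -> W M) (sigma : nlab -> {set W M}),
    (forall F, downG B F -> lsat rho sigma F) /\
    (forall F, downD B F -> ~ lsat rho sigma F).
Proof.
move=> hB hsat.
case: hsat => s1 [s2 [s3 [s4 [s5 [s6 [s7 [s8 [s9 [s10 [s11 [s12 [s13 [s14 [s15 [s16 [s17 [s18 [s19 s20]]]]]]]]]]]]]]]]]].
have hup := upper_In hB.
have hGsub : forall F, List.In F (upper x0 A0 B).1 -> downG B F.
  by move=> F H; exists (upper x0 A0 B).
have hbG : forall F, downG B F -> maxlab F <= bnd B.
  by move=> F [Sq [HS HF]]; apply: bnd_ok HS _; apply/List.in_or_app; left.
have hbD : forall F, downD B F -> maxlab F <= bnd B.
  by move=> F [Sq [HS HF]]; apply: bnd_ok HS _; apply/List.in_or_app; right.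
have hkL : forall F, downG B F -> keepL F -> List.In F (upper x0 A0 B).1.
  by move=> F [Sq [HS HF]] HK; exact: (allJ hB s8 HS).1 F HK HF.
have hkR : forall F, downD B F -> keepR F -> List.In F (upper x0 A0 B).2.
  by move=> F [Sq [HS HF]] HK; exact: (allJ hB s8 HS).2.1 F HK HF.
have himp : forall x A B', downD B (WF x (Imp A B')) -> downG B (WF x A) /\ downD B (WF x B').
  by move=> x A B' [Sq [HS HF]]; exact: (allJ hB s8 HS).2.2 x A B' HF.
have hinN : forall a x, List.In (InN a x) (upper x0 A0 B).1 -> exists A, downG B (ExF a A).
  by move=> a x H; exact: (allI hB hup).1 a x H.
have hcnd : forall x a A B', downG B (CondF x a A B') -> List.In (InN a x) (upper x0 A0 B).1.
  move=> x a A B' [Sq [HS HF]].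
  exact: (allJ hB s8 HS).1 (InN a x) erefl ((allI hB HS).2.1 _ _ _ _ HF).
have hrel : forall F, downD B F -> relational F = false.
  by move=> F [Sq [HS HF]]; exact: (allI hB HS).2.2 F HF.
exists (Mod hGsub hbG hinN s14), (rho hGsub hbG hinN s14), (sig (upper x0 A0 B).1 (bnd B)).
split.
- move=> F H; apply: satG; try eassumption.
- move=> F H; apply: satD; try eassumption.
Qed.
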